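(* Let $A,K$ be algebras and $\xi:A\to\mathrm{Out}(K)$ a coupling admitting at least one bimultiplication law covering it. Then the cohomology class of $f(\mu,h)$ in the Hochschild cohomology $HH^3(A,\mathrm{Anni}K)$ (with coefficients in the $A$-bimodule $\mathrm{Anni}K$ determined by $\xi$) is independent of the choice of the bimultiplication law $\mu$ covering $\xi$ and of the hindrance $h$ of $\mu$. This class is denoted $\mathrm{Obs}(\xi)$ (the obstruction of $\xi$).
   Context: All algebras are associative, not necessarily unital, over a field $\mathbb F$. For an algebra $K$, a bimultiplication of $K$ is a pair $(u,v)$ of linear maps $K\to K$ with $k_1u(k_2)=v(k_1)k_2$, $u(k_1k_2)=u(k_1)k_2$, $v(k_1k_2)=k_1v(k_2)$; these form an algebra $\mathrm{Mul}(K)$ with product $(u_1,v_1)(u_2,v_2)=(u_1\circ u_2,\ v_2\circ v_1)$. $\epsilon:K\to\mathrm{Mul}(K)$, $\epsilon(k_0)=(k\mapsto k_0k,\ k\mapsto kk_0)$; $\mathrm{Inn}(K)=\epsilon(K)$, $\mathrm{Out}(K)=\mathrm{Mul}(K)/\mathrm{Inn}(K)$ with projection $\natural$; $\mathrm{Anni}K=\{k: kK=0=Kk\}$. A coupling is an algebra homomorphism $\xi:A\to\mathrm{Out}(K)$. A bimultiplication law covering $\xi$ is a linear map $\mu:A\to\mathrm{Mul}(K)$, $\mu(a)=(u_a,v_a)$, with $\natural\circ\mu=\xi$ and $u_av_b=v_bu_a$ for all $a,b\in A$; then $\mathrm{Anni}K$ is an $A$-bimodule via $a\cdot n=u_a(n)$,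 $n\cdot a=v_a(n)$, independent of the choice of $\mu$. Curvature: $R^\mu(a_1,a_2)=\mu(a_1)\mu(a_2)-\mu(a_1a_2)$. A hindrance is a bilinear $h:A\times A\to K$ with $\epsilon\circ h=R^\mu$. $f(\mu,h)(a_1,a_2,a_3)=u_{a_1}h(a_2,a_3)-h(a_1a_2,a_3)+h(a_1,a_2a_3)-v_{a_3}h(a_1,a_2)$; it is a Hochschild $3$-cocycle with values in $\mathrm{Anni}K$. Hochschild cochains $C^n(A,N)$ are $n$-linear maps $A^n\to N$ with differential $\delta g(a_1,\dots,a_{n+1})=a_1g(a_2,\dots)+\sum_{i=1}^n(-1)^ig(\dots,a_ia_{i+1},\dots)+(-1)^{n+1}g(a_1,\dots,a_n)a_{n+1}$. *)

(* Defs.v *)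
From HB Require Import structures.
From mathcomp Require Import all_boot all_order all_algebra.
Set Implicit Arguments. Unset Strict Implicit. Unset Printing Implicit Defensive.
Import GRing.Theory.
Local Open Scope ring_scope.

Record nalg (F : fieldType) := NAlg {
  ncar :> lmodType F;
  nmul : ncar -> ncar -> ncar;
  nmulA : forall x y z, nmul x (nmul y z) = nmul (nmul x y) z;
  nmul_linl : forall (c : F) x y z, nmul (c *: x + y) z = c *: nmul x z + nmul y z;
  nmul_linr : forall (c : F) x y z, nmul z (c *: x + y) = c *: nmul z x + nmul z y
}.

Section Defs.
Variable F : fieldType.

Definition is_lin (V W : lmodType F) (f : V -> W) :=
  forall (c : F) x y, f (c *: x + y) = c *: f x + f y.

Definition is_bilin (V W : lmodType F) (g : V -> V -> W) :=
  (forall y, is_lin (fun x => g x y)) /\ (forall x, is_lin (g x)).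

Variables (A K : nalg F).

Definition is_bimul (u v : K -> K) :=
  [/\ is_lin u, is_lin v,
      (forall k1 k2, nmul k1 (u k2) = nmul (v k1) k2),
      (forall k1 k2, u (nmul k1 k2) = nmul (u k1) k2) &
      (forall k1 k2, v (nmul k1 k2) = nmul k1 (v k2))].

Definition is_inn (u v : K -> K) :=
  exists k0 : K, (forall k, u k = nmul k0 k) /\ (forall k, v k = nmul k k0).

Definition in_anni (n : K) := forall k, nmul n k = 0 /\ nmul k n = 0.

(* A coupling xi : A -> Out(K) = Mul(K)/Inn(K), given by a choice of
   representatives (xu a, xv a) in Mul(K) of xi(a); xi is linear and
   multiplicative, i.e. these identities hold modulo Inn(K). *)
Definition is_coupling (xu xv : A -> K -> K) :=
  [/\ (forall a, is_bimul (xu a) (xv a)),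
      (forall (c : F) a b,
         is_inn (fun k => xu (c *: a + b) k - (c *: xu a k + xu b k))
                (fun k => xv (c *: a + b) k - (c *: xv a k + xv b k))) &
      (forall a b,
         is_inn (fun k => xu a (xu b k) - xu (nmul a b) k)
                (fun k => xv b (xv a k) - xv (nmul a b) k))].

Definition is_bimul_law (xu xv : A -> K -> K) (u v : A -> K -> K) :=
  [/\ (forall (c : F) a b k, u (c *: a + b) k = c *: u a k + u b k),
      (forall (c : F) a b k, v (c *: a + b) k = c *: v a k + v b k),
      (forall a, is_bimul (u a) (v a)),
      (forall a, is_inn (fun k => u a k - xu a k) (fun k => v a k - xv a k)) &
      (forall a b k, u a (v b k) = v b (u a k))].

Definition is_hindrance (u v : A -> K -> K) (h : A -> A -> K) :=
  is_bilin h /\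
  forall a1 a2 k,
    nmul (h a1 a2) k = u a1 (u a2 k) - u (nmul a1 a2) k /\
    nmul k (h a1 a2) = v a2 (v a1 k) - v (nmul a1 a2) k.

Definition fobs (u v : A -> K -> K) (h : A -> A -> K) (a1 a2 a3 : A) : K :=
  u a1 (h a2 a3) - h (nmul a1 a2) a3 + h a1 (nmul a2 a3) - v a3 (h a1 a2).

(* Hochschild differential C^2(A, Anni K) -> C^3(A, Anni K),
   bimodule structure a.n = u a n, n.a = v a n *)
Definition hoch_d2 (u v : A -> K -> K) (g : A -> A -> K) (a1 a2 a3 : A) : K :=
  u a1 (g a2 a3) - g (nmul a1 a2) a3 + g a1 (nmul a2 a3) - v a3 (g a1 a2).

Definition hh3_same_class (u v : A -> K -> K) (f1 f2 : A -> A -> A -> K) :=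
  exists g : A -> A -> K,
    [/\ is_bilin g, (forall a1 a2, in_anni (g a1 a2)) &
        forall a1 a2 a3, f1 a1 a2 a3 - f2 a1 a2 a3 = hoch_d2 u v g a1 a2 a3].

End Defs.

(* Main.v *)
Require Import Defs.
From mathcomp Require Import all_boot all_order all_algebra.
From mathcomp Require Import boolp classical_sets.
Set Implicit Arguments. Unset Strict Implicit. Unset Printing Implicit Defensive.
Import GRing.Theory.
Local Open Scope ring_scope.

Lemma zlem (V : zmodType) (x : V) : 0 + x = 0 -> x = 0.
Proof. by rewrite add0r. Qed.

Ltac bubble T :=
  repeat match goal with
  | |- context [?X + T + ?Y] =>
      lazymatch Y with T => fail | _ => rewrite [X + T + Y]addrAC end
  end.

Ltac ztac :=
  apply/eqP; rewrite -subr_eq0; apply/eqP;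
  rewrite ?opprD ?opprK ?oppr0 ?addr0 ?add0r ?addrA;
  apply: zlem; rewrite ?addrA;
  repeat (match goal with |- context [?m] => lazymatch m with - ?t => bubble t; bubble m; rewrite addrK end end);
  try done.

Local Open Scope classical_set_scope.
Section Lift.
Variables (F : fieldType) (V W : lmodType F) (R : V -> W -> Prop).
Hypothesis Rne : forall a, exists w, R a w.
Hypothesis Rlin : forall c a b w w', R a w -> R b w' -> R (c*:a+b) (c*:w+w').

Definition goodG (G : set (V * W)) :=
  [/\ forall a w, G (a,w) -> R a w,
      forall a w w', G (a,w) -> G (a,w') -> w = w' &
      forall c a b w w', G (a,w) -> G (b,w') -> G (c*:a+b, c*:w+w')].

Lemma goodZ G c a w : goodG G -> G (a, w) -> G (c *: a, c *: w).
Proof.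
case=> _ _ Hc Ha; have := Hc (c - 1) a a w w Ha Ha.
by rewrite !scalerBl !scale1r !subrK.
Qed.

Lemma R00 : R 0 0.
Proof.
have [w Hw] := Rne 0; have := Rlin (-1) Hw Hw.
by rewrite !scaleN1r !addNr.
Qed.

Lemma linear_lift : exists k : V -> W, is_lin k /\ forall a, R a (k a).
Proof.
have [A [gA Amax]] : exists A, goodG A /\ forall B, A `<` B -> ~ goodG B.
  apply: Zorn_bigcup => FF FFg Ftot; split.
  - by move=> a w [X /FFg [HX _ _] /HX].
  - move=> a w w' [X FX HX] [Y FY HY].
    have [XY|YX] := Ftot _ _ FX FY.
    + by have [_ Hf _] := FFg _ FY; exact: Hf (XY _ HX) HY.
    + by have [_ Hf _] := FFg _ FX; exact: Hf HX (YX _ HY).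
  - move=> c a b w w' [X FX HX] [Y FY HY].
    have [XY|YX] := Ftot _ _ FX FY.
    + by have [_ _ Hc] := FFg _ FY; exists Y => //; exact: Hc (XY _ HX) HY.
    + by have [_ _ Hc] := FFg _ FX; exists X => //; exact: Hc HX (YX _ HY).
have [Hr Hf Hc] := gA.
have A00 : A (0, 0).
  apply: contrapT => nA.
  apply: (Amax (fun p => A p \/ p = (0,0))).
    split; first by move=> p Ap; left.
    by move=> H; exact: nA (H (0,0) (or_intror erefl)).
  split.
  - move=> a w [/Hr//|[-> ->]]; exact: R00.
  - have A0 w : A (0, w) -> w = 0.
      move=> H; have := Hc (-1) _ _ _ _ H H.
      by rewrite !scaleN1r !addNr => H0; exact: (Hf _ _ _ H H0).
    move=> a w w' [Ha|[E1 E2]] [Ha'|[E3 E4]]; subst.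
    + exact: Hf Ha Ha'.
    + exact: A0 _ Ha.
    + by rewrite (A0 _ Ha').
    + by [].
  - move=> c a b w w' [Ha|[-> ->]] [Hb|[-> ->]].
    + by left; apply: Hc.
    + by left; rewrite !addr0; apply: goodZ.
    + by left; rewrite !scaler0 !add0r.
    + by right; rewrite !scaler0 !addr0.
have tot a0 : exists w, A (a0, w).
  apply: contrapT => Hn.
  have [w0 Rw0] := Rne a0.
  pose B := fun p : V * W => exists c s ws, A (s, ws) /\ p = (s + c *: a0, ws + c *: w0).
  apply: (Amax B).
    split.
      by move=> [s ws] As; exists 0, s, ws; rewrite !scale0r !addr0.
    move=> H; apply: Hn; exists w0; apply: H.
    by exists 1, 0, 0; split => //; rewrite !scale1r !add0r.
  split.
  - move=> a w [c [s [ws [As [-> ->]]]]].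
    by rewrite addrC [ws + _]addrC; apply: Rlin => //; apply: Hr.
  - move=> a w w' [c [s [ws [As [-> ->]]]]] [c' [s' [ws' [As' [E ->]]]]].
    have [Ecc|Ncc] := eqVneq c c'.
      subst c'; move/addIr: E => Es; subst s'.
      by rewrite (Hf _ _ _ As As').
    exfalso; apply: Hn.
    have E2 : (c - c') *: a0 = s' - s.
      by rewrite scalerBl; apply/eqP; rewrite subr_eq addrAC -E addrAC subrr add0r.
    exists ((c - c')^-1 *: (ws' - ws)).
    have -> : a0 = (c - c')^-1 *: (s' - s).
      by rewrite -E2 scalerA mulVf ?scale1r // subr_eq0.
    apply: goodZ => //.
    have := Hc (-1) _ _ _ _ As As'.
    by rewrite !scaleN1r [- s + _]addrC [- ws + _]addrC.
  - move=> d a b w w' [c [s [ws [As [-> ->]]]]] [c' [s' [ws' [As' [-> ->]]]]].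
    exists (d * c + c'), (d *: s + s'), (d *: ws + ws'); split; first exact: Hc.
    by rewrite !scalerDr !scalerDl !scalerA; congr pair; rewrite addrACA.
exists (fun a => proj1_sig (cid (tot a))); split.
  move=> c a b.
  case: (cid (tot (c *: a + b))) => w Hw /=.
  case: (cid (tot a)) => wa Ha /=.
  case: (cid (tot b)) => wb Hb /=.
  exact: Hf Hw (Hc _ _ _ _ _ Ha Hb).
by move=> a; case: (cid (tot a)) => w Hw /=; apply: Hr.
Qed.

End Lift.
Local Close Scope classical_set_scope.

Section Helpers.
Variables (F : fieldType).

Lemma linD (V W : lmodType F) (f : V -> W) : is_lin f -> forall x y, f (x + y) = f x + f y.
Proof. by move=> Hf x y; rewrite -[x]scale1r Hf !scale1r. Qed.
Lemma lin0 (V W : lmodType F) (f : V -> W) : is_lin f -> f 0 = 0.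
Proof. move=> Hf; have := linD Hf 0 0; rewrite addr0 => /eqP; rewrite -subr_eq0.
by rewrite opprD addrA subrr add0r oppr_eq0 => /eqP. Qed.
Lemma linZ (V W : lmodType F) (f : V -> W) : is_lin f -> forall c x, f (c *: x) = c *: f x.
Proof. by move=> Hf c x; rewrite -[c *: x]addr0 Hf (lin0 Hf) addr0. Qed.
Lemma linN (V W : lmodType F) (f : V -> W) : is_lin f -> forall x, f (- x) = - f x.
Proof. by move=> Hf x; rewrite -scaleN1r linZ // scaleN1r. Qed.

Variable K : nalg F.
Lemma nmulDl (x y z : K) : nmul (x + y) z = nmul x z + nmul y z.
Proof. by rewrite -[x]scale1r nmul_linl !scale1r. Qed.
Lemma nmulDr (x y z : K) : nmul z (x + y) = nmul z x + nmul z y.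
Proof. by rewrite -[x]scale1r nmul_linr !scale1r. Qed.
Lemma nlinl (z : K) : is_lin (fun x : K => nmul x z).
Proof. by move=> c x y; rewrite nmul_linl. Qed.
Lemma nlinr (z : K) : is_lin (nmul z).
Proof. by move=> c x y; rewrite nmul_linr. Qed.
Lemma nmulNl (x z : K) : nmul (- x) z = - nmul x z.
Proof. exact: (linN (nlinl z)). Qed.
Lemma nmulNr (x z : K) : nmul z (- x) = - nmul z x.
Proof. exact: (linN (nlinr z)). Qed.
Lemma nmulZl c (x z : K) : nmul (c *: x) z = c *: nmul x z.
Proof. exact: (linZ (nlinl z)). Qed.
Lemma nmulZr c (x z : K) : nmul z (c *: x) = c *: nmul z x.
Proof. exact: (linZ (nlinr z)). Qed.
End Helpers.

Theorem mainTheorem8 (F : fieldType) (A K : nalg F) (xu xv : A -> K -> K)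
  (u v : A -> K -> K) (h : A -> A -> K)
  (u' v' : A -> K -> K) (h' : A -> A -> K) :
  is_coupling xu xv ->
  is_bimul_law xu xv u v -> is_hindrance u v h ->
  is_bimul_law xu xv u' v' -> is_hindrance u' v' h' ->
  hh3_same_class u v (fobs u v h) (fobs u' v' h').
Proof.
move=> _ [uL vL uB uI uC] [[hL1 hL2] hE] [uL' vL' uB' uI' uC'] [[hL1' hL2'] hE'].
pose Rk (a : A) (w : K) := (forall z, u' a z - u a z = nmul w z) /\
                           (forall z, v' a z - v a z = nmul z w).
have [kk [kkL Hk]] : exists kk : A -> K, is_lin kk /\ forall a, Rk a (kk a).
  apply: linear_lift.
  - move=> a; have [p [Hp1 Hp2]] := uI a; have [p' [Hp1' Hp2']] := uI' a.
    exists (p' - p); split => z.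
    + rewrite nmulDl nmulNl -Hp1 -Hp1'; ztac.
    + rewrite nmulDr nmulNr -Hp2 -Hp2'; ztac.
  - move=> c a b w w' [Hw1 Hw2] [Hw1' Hw2']; split => z.
    + by rewrite uL uL' nmul_linl -Hw1 -Hw1' scalerBr; ztac.
    + by rewrite vL vL' nmul_linr -Hw2 -Hw2' scalerBr; ztac.
have Hu' a z : u' a z = u a z + nmul (kk a) z by rewrite -(Hk a).1 addrC subrK.
have Hv' a z : v' a z = v a z + nmul z (kk a) by rewrite -(Hk a).2 addrC subrK.
have uD a x y : u a (x + y) = u a x + u a y by case: (uB a) => Hl _ _ _ _; apply: linD.
have uN a x : u a (- x) = - u a x by case: (uB a) => Hl _ _ _ _; apply: linN.
have uZ a c x : u a (c *: x) = c *: u a x by case: (uB a) => Hl _ _ _ _; apply: linZ.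
have vD a x y : v a (x + y) = v a x + v a y by case: (uB a) => _ Hl _ _ _; apply: linD.
have vN a x : v a (- x) = - v a x by case: (uB a) => _ Hl _ _ _; apply: linN.
have vZ a c x : v a (c *: x) = c *: v a x by case: (uB a) => _ Hl _ _ _; apply: linZ.
have p3 a k1 k2 : nmul (v a k1) k2 = nmul k1 (u a k2) by case: (uB a) => _ _ H _ _; rewrite H.
have p4 a k1 k2 : u a (nmul k1 k2) = nmul (u a k1) k2 by case: (uB a) => _ _ _ H _; rewrite H.
have p5 a k1 k2 : v a (nmul k1 k2) = nmul k1 (v a k2) by case: (uB a) => _ _ _ _ H; rewrite H.
have kD x y : kk (x + y) = kk x + kk y by apply: linD.
have kN x : kk (- x) = - kk x by apply: linN.
have kZ c x : kk (c *: x) = c *: kk x by apply: linZ.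
have h1 y c a b : h (c *: a + b) y = c *: h a y + h b y := hL1 y c a b.
have h1' y c a b : h' (c *: a + b) y = c *: h' a y + h' b y := hL1' y c a b.
have h2 y c a b : h y (c *: a + b) = c *: h y a + h y b := hL2 y c a b.
have h2' y c a b : h' y (c *: a + b) = c *: h' y a + h' y b := hL2' y c a b.
have kL c x y : kk (c *: x + y) = c *: kk x + kk y := kkL c x y.
exists (fun a1 a2 => h a1 a2 + (u a1 (kk a2) + v a2 (kk a1) + nmul (kk a1) (kk a2)
                     - kk (nmul a1 a2)) - h' a1 a2).
split.
- split => [y c a b | x c a b] /=.
  + rewrite h1 h1' uL nmul_linl !kL vD vZ nmul_linl !scalerDr ?scalerN; ztac.
  + rewrite h2 h2' vL nmul_linr !kL uD uZ nmul_linr !scalerDr ?scalerN; ztac.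
- move=> a1 a2 z; split.
  + rewrite ?nmulDl ?nmulNl (hE a1 a2 z).1 (hE' a1 a2 z).1 !Hu'.
    rewrite ?uD ?uN ?vD ?vN ?nmulDl ?nmulDr ?nmulNl ?nmulNr ?p4 ?p5 ?p3 ?nmulA ?uC.
    ztac.
  + rewrite ?nmulDr ?nmulNr (hE a1 a2 z).2 (hE' a1 a2 z).2 !Hv'.
    rewrite ?uD ?uN ?vD ?vN ?nmulDl ?nmulDr ?nmulNl ?nmulNr ?p4 ?p5 ?p3 ?nmulA ?uC.
    ztac.
- move=> a1 a2 a3; rewrite /fobs /hoch_d2.
  rewrite !Hu' !Hv' (hE' a2 a3 (kk a1)).2 (hE' a1 a2 (kk a3)).1 !Hu' !Hv'.
  rewrite ?uD ?uN ?vD ?vN ?nmulDl ?nmulDr ?nmulNl ?nmulNr ?p4 ?p5 ?p3 ?nmulA ?uC.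
  rewrite ?uD ?uN ?vD ?vN ?nmulDl ?nmulDr ?nmulNl ?nmulNr ?p4 ?p5 ?p3 ?nmulA ?uC.
  ztac.
Qed.
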